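(* Let $v\in\mathbb{N}$ and $S\subset\mathbb{N}_0$ finite. (a) If $S$ is up-admissible for $v$, then $S$ is down-admissible for $w=v(S)$ and $v=w[S]$. (b) If $S$ is down-admissible for $v$, then $S$ is up-admissible for $u=v[S]$ and $v=u(S)$.
   Context: Fix a prime $p$; $\mathbb{N}=\{1,2,\dots\}$, $\mathbb{N}_0=\mathbb{N}\cup\{0\}$. For $v\in\mathbb{N}$ write $v=\sum_{i=0}^{j}a_ip^i$ with $0\le a_i\le p-1$, $a_j\ne0$, and $a_i=0$ for $i>j$. A finite $S\subset\mathbb{N}_0$ splits uniquely into maximal subsets of consecutive integers (blocks). $S$ is down-admissible for $v$ if (d1) $a_{\min B}\ne0$ for every block $B$ of $S$ and (d2) $s\in S$, $a_{s+1}=0$ imply $s+1\in S$; then $v[S]:=\sum_i\epsilon_ia_ip^i$ with $\epsilon_i=-1$ for $i\in S$, $\epsilon_i=1$ otherwise. $S$ is up-admissible for $v$ if (u1) $a_{\min B}\ne0$ for every block $B$ of $S$ and (u2) $s\in S$, $a_{s+1}=p-1$ imply $s+1\in S$; then $v(S):=\sum_ka'_kp^k$ with $a'_k=-a_k$ for $k\in S$, $a'_k=a_k+2$ for $k\notin S$, $k-1\in S$, and $a'_k=a_k$ otherwise. Admissibility for $v(S)$ or $v[S]$ refers to the $p$-adic digits of these numbers. *)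

(* Defs.v *)
From mathcomp Require Import all_boot all_order all_algebra.
Set Implicit Arguments. Unset Strict Implicit. Unset Printing Implicit Defensive.
Import Order.TTheory GRing.Theory Num.Theory.

Definition digit (p v i : nat) : nat := (v %/ p ^ i) %% p.

(* A finite subset S of N_0 is represented by a list S : seq nat (membership
   via \in).  The block [m, n] = {m, ..., n} is a maximal subset of
   consecutive integers of S. *)
Definition is_block (S : seq nat) (m n : nat) : Prop :=
  m <= n /\ (forall i, m <= i <= n -> i \in S) /\
  (m = 0 \/ m.-1 \notin S) /\ n.+1 \notin S.

Definition down_adm (p v : nat) (S : seq nat) : Prop :=
  (forall m n, is_block S m n -> digit p v m != 0) /\
  (forall s, s \in S -> digit p v s.+1 = 0 -> s.+1 \in S).

Definition up_adm (p v : nat) (S : seq nat) : Prop :=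
  (forall m n, is_block S m n -> digit p v m != 0) /\
  (forall s, s \in S -> digit p v s.+1 = p.-1 -> s.+1 \in S).

(* A bound beyond which all digits of v vanish and which exceeds max S + 1,
   so that the (formally infinite) sums below are finite sums over k < bnd. *)
Definition bnd (v : nat) (S : seq nat) : nat := v + (\max_(s <- S) s).+2.

Local Open Scope ring_scope.

Definition vdown (p v : nat) (S : seq nat) : int :=
  \sum_(i < bnd v S)
    (if (i : nat) \in S then - (digit p v i)%:Z else (digit p v i)%:Z)
      * (p ^ i)%N%:Z.

Definition vup (p v : nat) (S : seq nat) : int :=
  \sum_(k < bnd v S)
    (if (k : nat) \in S then - (digit p v k)%:Z
     else if (0 < (k : nat))%N && ((k : nat).-1 \in S)
          then (digit p v k)%:Z + 2
          else (digit p v k)%:Z)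
      * (p ^ k)%N%:Z.

(* Main.v *)
Require Import Defs.
From mathcomp Require Import all_boot all_order all_algebra.
From mathcomp Require Import zify ring.
Import Order.TTheory GRing.Theory Num.Theory.
Local Open Scope ring_scope.

Lemma digit0 p i : digit p 0 i = 0%N.
Proof. by rewrite /digit div0n mod0n. Qed.

Lemma digitS p v i : (0 < p)%N -> digit p v i.+1 = digit p (v %/ p) i.
Proof. by move=> _; rewrite /digit expnS divnMA. Qed.

Lemma digit_sum p N (b : nat -> nat) : (1 < p)%N ->
  (forall k, (b k < p)%N) -> (forall k, (N <= k)%N -> b k = 0%N) ->
  forall i, digit p (\sum_(k < N) b k * p ^ k)%N i = b i.
Proof.
move=> p1; elim: N b => [|N IH] b hb hN i.
  by rewrite big_ord0 digit0 hN.
have p0 : (0 < p)%N by lia.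
have -> : (\sum_(k < N.+1) b k * p ^ k = b 0%N + (\sum_(k < N) b k.+1 * p ^ k) * p)%N.
  rewrite big_ord_recl /= muln1 big_distrl /=; congr (_ + _)%N.
  by apply: eq_bigr => k _; rewrite expnS mulnCA mulnC.
case: i => [|i].
  by rewrite /digit expn0 divn1 addnC modnMDl modn_small.
rewrite digitS // addnC divnMDl // (divn_small (hb 0%N)) addn0.
by apply: (IH (fun k => b k.+1)) => // k hk; apply: hN.
Qed.

Lemma digit_exp p N v : (1 < p)%N -> (v < p ^ N)%N ->
  (\sum_(k < N) digit p v k * p ^ k)%N = v.
Proof.
move=> p1; have p0 : (0 < p)%N by lia.
elim: N v => [|N IH] v hv.
  by rewrite big_ord0; move: hv; rewrite expn0; case: v.
rewrite big_ord_recl /= muln1.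
have -> : (\sum_(i < N) digit p v (bump 0 i) * p ^ bump 0 i
   = (\sum_(i < N) digit p (v %/ p) i * p ^ i) * p)%N.
  rewrite big_distrl /=; apply: eq_bigr => k _.
  by rewrite /bump /= add1n digitS // expnS mulnCA mulnC.
rewrite IH; first by rewrite /digit expn0 divn1 addnC -divn_eq.
by rewrite ltn_divLR // -expnSr.
Qed.

Lemma digit_big p v k : (1 < p)%N -> (v <= k)%N -> digit p v k = 0%N.
Proof.
move=> p1 hk; rewrite /digit divn_small ?mod0n //.
apply: (leq_trans (ltn_expl v p1)); rewrite leq_pexp2l //; lia.
Qed.

Lemma sum_bound (F : nat -> int) N1 N2 :
  (forall k, (N1 <= k)%N -> F k = 0) -> (forall k, (N2 <= k)%N -> F k = 0) ->
  \sum_(k < N1) F k = \sum_(k < N2) F k.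
Proof.
wlog le : N1 N2 / (N1 <= N2)%N.
  move=> W h1 h2; case: (leqP N1 N2) => h; first exact: W.
  by symmetry; apply: W => //; apply: ltnW.
move=> h1 _; rewrite -!(big_mkord xpredT) (@big_cat_nat _ _ _ N1 0 N2 _ _ (leq0n N1) le) /=.
rewrite [X in _ + X]big_nat_cond [X in _ + X]big1 ?addr0 // => k /andP[/andP[hk _] _].
exact: h1.
Qed.

Lemma tele (p : nat) (t : nat -> int) N :
  \sum_(k < N.+1) ((p%:Z) * t k - (if (k : nat) is j.+1 then t j else 0)) * (p ^ k)%N%:Z
  = t N * (p ^ N.+1)%N%:Z.
Proof.
elim: N => [|N IH].
  by rewrite big_ord_recl big_ord0 /= addr0 expn0 expn1 subr0 mulr1 mulrC.
rewrite big_ord_recr /= IH [(p ^ N.+2)%N]expnS [(p ^ N.+1)%N]expnS !PoszM.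
ring.
Qed.

Lemma PoszSum N (F : nat -> nat) :
  (\sum_(k < N) F k)%N%:Z = \sum_(k < N) (F k)%:Z.
Proof.
elim: N => [|N IH]; first by rewrite !big_ord0.
by rewrite !big_ord_recr /= PoszD IH.
Qed.

Definition spn (S : seq nat) (k : nat) : nat := if k is j.+1 then (j \in S : nat) else 0%N.

Lemma spn_le1 S k : (spn S k <= 1)%N.
Proof. by case: k => //= j; case: (j \in S). Qed.

Definition maxS (S : seq nat) : nat := \max_(x <- S) x.

Lemma memM (S : seq nat) s : s \in S -> (s <= maxS S)%N.
Proof. by move=> h; apply: (leq_bigmax_seq (F := id) s h). Qed.

Lemma bnd_notin v S k : (bnd v S <= k.+1)%N -> k \notin S.
Proof.
move=> h; apply/negP => /memM; change (bnd v S) with (v + (maxS S).+2)%N in h; lia.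
Qed.

Lemma bnd_spn v S k : (bnd v S <= k)%N -> spn S k = 0%N.
Proof.
case: k => //= j h; have := bnd_notin v S j; rewrite h.
by move=> /(_ isT) /negPf ->.
Qed.

Lemma bnd_ge v S : (v < bnd v S)%N.
Proof. rewrite /bnd; lia. Qed.

Lemma block_of S k : k \in S -> spn S k = 0%N -> exists n, is_block S k n.
Proof.
move=> hk hs.
have ex : exists j, (k <= j)%N && (j.+1 \notin S).
  exists (k + maxS S)%N; apply/andP; split; first by apply: leq_addr.
  by apply/negP => /memM; lia.
case: (ex_minnP ex) => n /andP[kn nS] hmin.
exists n; split => //; split.
  move=> i /andP[ki iN].
  case: (ltngtP k i) => [hik| |<-//]; last by lia.
  case: i ki iN hik => // i ki iN hik.
  apply/negPn/negP => hi.
  have := hmin i; rewrite hi andbT => /(_ (ltnSE hik)); lia.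
split => //.
case: k hk hs {ex hmin kn} => [|j] _ /=; [by left | right].
by case: (j \in S) hs.
Qed.

Lemma spn_block S k : k \in S -> spn S k = 0%N -> exists n, is_block S k n.
Proof. exact: block_of. Qed.

Lemma is_block_start S m n : is_block S m n -> m \in S /\ spn S m = 0%N.
Proof.
move=> [mn [hin [h0 _]]]; split; first by apply: hin; rewrite leqnn mn.
case: m h0 {hin mn} => [|j] //= [//|hj]; by rewrite (negPf hj).
Qed.

Lemma tele_S p v S :
  \sum_(k < bnd v S) ((p%:Z) * ((k : nat) \in S : nat)%:Z - (spn S k)%:Z) * (p ^ k)%N%:Z = 0.
Proof.
have -> : bnd v S = (v + maxS S).+2 by rewrite /bnd !addnS.
have := tele p (fun k => ((k \in S) : nat)%:Z) (v + maxS S).+1.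
have -> : (((v + maxS S).+1 \in S) : nat)%:Z = 0.
  by rewrite (negPf (@bnd_notin v S _ _)) //= /bnd /maxS !addnS.
rewrite mul0r => h; apply: etrans h; apply: eq_bigr => -[k hk] _ /=.
by case: k hk.
Qed.

Lemma spnS S j : spn S j.+1 = (j \in S : nat).
Proof. by []. Qed.

Lemma up_case p v S : (1 < p)%N -> (0 < v)%N -> up_adm p v S ->
  exists w : nat, (0 < w)%N /\ w%:Z = vup p v S /\
       down_adm p w S /\ vdown p w S = v%:Z.
Proof.
move=> p1 v0 [u1 u2].
have aP k : (digit p v k < p)%N by rewrite /digit ltn_mod; lia.
have aN k : (bnd v S <= k)%N -> digit p v k = 0%N.
  by move=> h; apply: digit_big => //; have := bnd_ge v S; lia.
have hstart k : k \in S -> spn S k = 0%N -> digit p v k != 0%N.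
  by move=> hk hs; have [n /u1] := block_of _ _ hk hs.
have hcarry j : j \in S -> j.+1 \notin S -> digit p v j.+1 != p.-1.
  by move=> hj hj1; apply/eqP => /(u2 _ hj); rewrite (negPf hj1).
pose b k := if k \in S then (p - digit p v k - spn S k)%N
            else (digit p v k + spn S k)%N.
have hb k : (b k < p)%N.
  rewrite /b; have := spn_le1 S k; have := aP k.
  case: ifP => hk.
    case: (spn S k =P 0%N) => [h0|h0]; last lia.
    have := hstart k hk h0; lia.
  case: k hk => [|j] hk /=; first lia.
  case hj: (j \in S) => /=; last lia.
  have := hcarry j hj (negbT hk); lia.
have hbN k : (bnd v S <= k)%N -> b k = 0%N.
  move=> h; rewrite /b (bnd_spn _ _ _ h) aN //.
  by rewrite (negPf (bnd_notin _ _ _ (leqW h))).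
pose w := (\sum_(k < bnd v S) b k * p ^ k)%N.
have dw := digit_sum p (bnd v S) b p1 hb hbN.
rewrite -/w in dw.
have hvup : w%:Z = vup p v S.
  rewrite /w (PoszSum _ (fun k => b k * p ^ k)%N) /vup -[X in _ = X]addr0 -[X in _ = _ + X](tele_S p v S) -big_split /=.
  apply: eq_bigr => k _; rewrite PoszM -mulrDl; congr (_ * _).
  rewrite /b; have := spn_le1 S k; have := aP k.
  case: (k : nat) => [|j] /=; case: ifP => hk; rewrite ?hk /=; try lia;
  case: (j \in S) => /=; lia.
have hvd : vdown p w S = v%:Z.
  rewrite /vdown (@sum_bound (fun k => (if k \in S then - (digit p w k)%:Z
      else (digit p w k)%:Z) * (p ^ k)%N%:Z) _ (bnd v S)); first last.
  - by move=> k hk; rewrite dw hbN // -[Posz 0]/(0:int) oppr0 if_same mul0r.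
  - move=> k hk; rewrite (digit_big p w k p1); last by have := bnd_ge w S; lia.
    by rewrite -[Posz 0]/(0:int) oppr0 if_same mul0r.
  have E : \sum_(k < bnd v S) (if (k:nat) \in S then - (digit p w k)%:Z
      else (digit p w k)%:Z) * (p ^ k)%N%:Z =
    \sum_(k < bnd v S) (digit p v k)%:Z * (p ^ k)%N%:Z -
    \sum_(k < bnd v S) ((p%:Z) * ((k : nat) \in S : nat)%:Z - (spn S k)%:Z) * (p ^ k)%N%:Z.
    rewrite -sumrB; apply: eq_bigr => k _; rewrite -mulrBl; congr (_ * _).
    rewrite dw /b; have := spn_le1 S k; have := aP k.
    case: (k : nat) => [|j] /=; case: ifP => hk; rewrite ?hk /=; try lia;
    case: (j \in S) => /=; lia.
  rewrite E tele_S subr0.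
  have V : (\sum_(k < bnd v S) digit p v k * p ^ k)%N = v.
    apply: digit_exp => //.
    apply: (leq_trans (ltn_expl v p1)); rewrite leq_pexp2l ?(ltnW p1) //.
    by have := bnd_ge v S; lia.
  rewrite -[X in _ = Posz X]V (PoszSum _ (fun k => digit p v k * p ^ k)%N); apply: eq_bigr => k _; by rewrite PoszM.
exists w; split; [|split; [exact: hvup|split; [|exact: hvd]]]; last first.
- split.
  + move=> m n hblk; have [hm hs] := is_block_start _ _ _ hblk.
    rewrite dw /b hm hs; have := aP m; lia.
  + move=> s hs; rewrite dw /b; case: ifP => // hs1.
    rewrite spnS hs /=; lia.
- rewrite lt0n; apply/negP => /eqP w0.
  move: hvd; rewrite w0 /vdown big1 => [h|k _].
    lia.
  by rewrite digit0 -[Posz 0]/(0:int) oppr0 if_same mul0r.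
Qed.

Lemma vup_term0 p x y S k : (bnd x S <= k)%N -> digit p y k = 0%N ->
  (if k \in S then - (digit p y k)%:Z
     else if (0 < k)%N && (k.-1 \in S)
          then (digit p y k)%:Z + 2
          else (digit p y k)%:Z) * (p ^ k)%N%:Z = 0.
Proof.
move=> hk hd; rewrite (negPf (bnd_notin _ _ _ (leqW hk))) hd.
case: k hk {hd} => [|j] hk /=; first by rewrite mul0r.
by rewrite (negPf (bnd_notin _ _ _ hk)) mul0r.
Qed.

Lemma down_case p v S : (1 < p)%N -> (0 < v)%N -> down_adm p v S ->
  exists u : nat, (0 < u)%N /\ u%:Z = vdown p v S /\
       up_adm p u S /\ vup p u S = v%:Z.
Proof.
move=> p1 v0 [d1 d2].
have aP k : (digit p v k < p)%N by rewrite /digit ltn_mod; lia.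
have aN k : (bnd v S <= k)%N -> digit p v k = 0%N.
  by move=> h; apply: digit_big => //; have := bnd_ge v S; lia.
have hstart k : k \in S -> spn S k = 0%N -> digit p v k != 0%N.
  by move=> hk hs; have [n /d1] := block_of _ _ hk hs.
have hnz j : j \in S -> j.+1 \notin S -> digit p v j.+1 != 0%N.
  by move=> hj hj1; apply/eqP => /(d2 _ hj); rewrite (negPf hj1).
pose c k := if k \in S then (p - digit p v k - spn S k)%N
            else (digit p v k - spn S k)%N.
have hc k : (c k < p)%N.
  rewrite /c; have := spn_le1 S k; have := aP k.
  case: ifP => hk; last lia.
  case: (spn S k =P 0%N) => [h0|h0]; last lia.
  have := hstart k hk h0; lia.
have hcN k : (bnd v S <= k)%N -> c k = 0%N.
  move=> h; rewrite /c (bnd_spn _ _ _ h) aN //.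
  by rewrite (negPf (bnd_notin _ _ _ (leqW h))).
pose u := (\sum_(k < bnd v S) c k * p ^ k)%N.
have du := digit_sum p (bnd v S) c p1 hc hcN.
rewrite -/u in du.
have V : (\sum_(k < bnd v S) digit p v k * p ^ k)%N = v.
  apply: digit_exp => //.
  apply: (leq_trans (ltn_expl v p1)); rewrite leq_pexp2l ?(ltnW p1) //.
  by have := bnd_ge v S; lia.
have hvd : u%:Z = vdown p v S.
  rewrite /u (PoszSum _ (fun k => c k * p ^ k)%N) /vdown -[X in _ = X]addr0 -[X in _ = _ + X](tele_S p v S) -big_split /=.
  apply: eq_bigr => k _; rewrite PoszM -mulrDl; congr (_ * _).
  rewrite /c; have := spn_le1 S k; have := aP k.
  case: (k : nat) => [|j] /=; case: ifP => hk; rewrite ?hk /=; try lia;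
  case hj: (j \in S) => /=; try lia; have := hnz j hj (negbT hk); lia.
have hvu : vup p u S = v%:Z.
  rewrite /vup (@sum_bound (fun k => (if k \in S then - (digit p u k)%:Z
     else if (0 < k)%N && (k.-1 \in S)
          then (digit p u k)%:Z + 2
          else (digit p u k)%:Z) * (p ^ k)%N%:Z) _ (bnd v S)); first last.
  - by move=> k hk; apply: (vup_term0 _ v) => //; rewrite du hcN.
  - move=> k hk; apply: (vup_term0 _ u) => //; apply: digit_big => //.
    by have := bnd_ge u S; lia.
  have E : \sum_(k < bnd v S) (if (k:nat) \in S then - (digit p u k)%:Z
     else if (0 < (k:nat))%N && ((k:nat).-1 \in S)
          then (digit p u k)%:Z + 2
          else (digit p u k)%:Z) * (p ^ k)%N%:Z =
    \sum_(k < bnd v S) (digit p v k)%:Z * (p ^ k)%N%:Z -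
    \sum_(k < bnd v S) ((p%:Z) * ((k : nat) \in S : nat)%:Z - (spn S k)%:Z) * (p ^ k)%N%:Z.
    rewrite -sumrB; apply: eq_bigr => k _; rewrite -mulrBl; congr (_ * _).
    rewrite du /c; have := spn_le1 S k; have := aP k.
    case: (k : nat) => [|j] /=; case: ifP => hk; rewrite ?hk /=; try lia;
    case hj: (j \in S) => /=; try lia; have := hnz j hj (negbT hk); lia.
  rewrite E tele_S subr0.
  rewrite -[X in _ = Posz X]V (PoszSum _ (fun k => digit p v k * p ^ k)%N).
  by apply: eq_bigr => k _; rewrite PoszM.
exists u; split; [|split; [exact: hvd|split; [|exact: hvu]]]; last first.
- split.
  + move=> m n hblk; have [hm hs] := is_block_start _ _ _ hblk.
    rewrite du /c hm hs; have := aP m; lia.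
  + move=> s hs; rewrite du /c; case: ifP => // hs1.
    rewrite spnS hs /=; have := aP s.+1; lia.
- rewrite lt0n; apply/negP => /eqP u0.
  have c0 k : c k = 0%N by rewrite -du u0 digit0.
  have [hS|[x hx]] : S = [::] \/ exists x, x \in S.
    by case: (S) => [|x S']; [left|right; exists x; rewrite inE eqxx].
    move: V; rewrite big1 => [|k _]; first lia.
    have hk j : j \in S = false by rewrite hS.
    have := c0 k; rewrite /c hk.
    by case: (k : nat) => [|j] /=; rewrite ?hk ?subn0 => ->.
  have ex : exists k, (fun k => k \in S) k by exists x.
  case: (ex_minnP ex) => m hm hmin.
  have hs : spn S m = 0%N.
    case: m hm hmin => // j hm hmin /=.
    by case hj: (j \in S) => //; have := hmin j hj; lia.
  have := c0 m; rewrite /c hm hs; have := aP m; have := hstart m hm hs; lia.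
Qed.

Theorem lemma2p14 (p v : nat) (S : seq nat) :
  prime p -> (0 < v)%N ->
  (up_adm p v S ->
     exists w : nat, (0 < w)%N /\ w%:Z = vup p v S /\
       down_adm p w S /\ vdown p w S = v%:Z) /\
  (down_adm p v S ->
     exists u : nat, (0 < u)%N /\ u%:Z = vdown p v S /\
       up_adm p u S /\ vup p u S = v%:Z).
Proof.
move=> pp v0; have p1 := prime_gt1 pp; split.
- exact: up_case.
- exact: down_case.
Qed.
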